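(* Let $L$ be a lattice. The following are equivalent: (i) $L$ is distributive; (ii) $M_3[L]$ is a modular lattice; (iii) $M_3[L]$ is an Arguesian lattice. Moreover, if these conditions hold, then for every field $\mathbb{F}$ the lattice $M_3[L]$ can be embedded into the lattice of all subspaces of some vector space over $\mathbb{F}$.
   Context: A triple $(a,b,c)\in L^3$ is balanced if $a\wedge b=a\wedge c=b\wedge c$; $M_3[L]$ is the set of balanced triples, ordered componentwise (Schmidt's $M_3[L]$ construction). When $L$ is distributive, $M_3[L]$ is a lattice with componentwise meet and join $(a,b,c)\vee(a',b',c')=\overline{(a\vee a',b\vee b',c\vee c')}$, where $\overline{(a,b,c)}=(a\vee(b\wedge c),\,b\vee(a\wedge c),\,c\vee(a\wedge b))$. A lattice is Arguesian if it satisfies the Arguesian identity (the lattice-theoretic form of Desargues' theorem, satisfied by subspace lattices of vector spaces). *)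

(* Defs.v *)
From HB Require Import structures.
From mathcomp Require Import all_boot all_order all_algebra.
Set Implicit Arguments. Unset Strict Implicit. Unset Printing Implicit Defensive.
Import Order.TTheory GRing.Theory.
Local Open Scope order_scope.

Definition is_lub {T : Type} (le : T -> T -> Prop) (x y s : T) : Prop :=
  le x s /\ le y s /\ forall u, le x u -> le y u -> le s u.

Definition is_glb {T : Type} (le : T -> T -> Prop) (x y m : T) : Prop :=
  le m x /\ le m y /\ forall u, le u x -> le u y -> le u m.

Definition lattice_ops {T : Type} (le : T -> T -> Prop)
    (join meet : T -> T -> T) : Prop :=
  (forall x y, is_lub le x y (join x y)) /\ (forall x y, is_glb le x y (meet x y)).

Definition modular_identity {T : Type} (le : T -> T -> Prop)
    (join meet : T -> T -> T) : Prop :=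
  forall x y z, le x z -> join x (meet y z) = meet (join x y) z.

Definition arguesian_identity {T : Type} (le : T -> T -> Prop)
    (join meet : T -> T -> T) : Prop :=
  forall a0 a1 a2 b0 b1 b2 : T,
    let c0 := meet (join a1 a2) (join b1 b2) in
    let c1 := meet (join a0 a2) (join b0 b2) in
    let c2 := meet (join a0 a1) (join b0 b1) in
    let c := meet c2 (join c0 c1) in
    le (meet (meet (join a0 b0) (join a1 b1)) (join a2 b2))
       (join a0 (meet b0 (join c b1))).

Definition is_modular_lattice {T : Type} (le : T -> T -> Prop) : Prop :=
  exists join meet, lattice_ops le join meet /\ modular_identity le join meet.

Definition is_arguesian_lattice {T : Type} (le : T -> T -> Prop) : Prop :=
  exists join meet, lattice_ops le join meet /\ arguesian_identity le join meet.

Definition distributive_lattice {d : Order.disp_t} (L : latticeType d) : Prop :=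
  forall x y z : L, x `&` (y `|` z) = (x `&` y) `|` (x `&` z).

Definition balanced {d : Order.disp_t} {L : latticeType d} (t : L * L * L) : bool :=
  (t.1.1 `&` t.1.2 == t.1.1 `&` t.2) && (t.1.1 `&` t.2 == t.1.2 `&` t.2).

Definition M3 {d : Order.disp_t} (L : latticeType d) : Type :=
  {t : L * L * L | balanced t}.

Definition M3_le {d : Order.disp_t} {L : latticeType d} (x y : M3 L) : Prop :=
  [/\ (sval x).1.1 <= (sval y).1.1, (sval x).1.2 <= (sval y).1.2
    & (sval x).2 <= (sval y).2].

Definition is_subspace {F : fieldType} {V : lmodType F} (S : V -> Prop) : Prop :=
  S 0%R /\ forall (a : F) (u v : V), S u -> S v -> S (a *: u + v)%R.

Definition subspace_sum {F : fieldType} {V : lmodType F} (S T : V -> Prop) : V -> Prop :=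
  fun v => exists u w, S u /\ T w /\ v = (u + w)%R.

Definition subspace_meet {F : fieldType} {V : lmodType F} (S T : V -> Prop) : V -> Prop :=
  fun v => S v /\ T v.

Definition same_set {V : Type} (S T : V -> Prop) : Prop := forall v, S v <-> T v.

Definition subspace_lattice_embedding {T : Type} (le : T -> T -> Prop)
    {F : fieldType} {V : lmodType F} (f : T -> V -> Prop) : Prop :=
  (forall x, is_subspace (f x)) /\
  (forall x y, same_set (f x) (f y) -> x = y) /\
  (forall x y s, is_lub le x y s -> same_set (f s) (subspace_sum (f x) (f y))) /\
  (forall x y m, is_glb le x y m -> same_set (f m) (subspace_meet (f x) (f y))).

(* Main.v *)
Require Import Defs.
From HB Require Import structures.
From mathcomp Require Import all_boot all_order all_algebra.
From mathcomp Require Import ring.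
From mathcomp Require Import boolp classical_sets functions.
Set Implicit Arguments. Unset Strict Implicit. Unset Printing Implicit Defensive.
Import Order.TTheory GRing.Theory.

Local Open Scope order_scope.

Section Basic.
Context {d : Order.disp_t} {L : latticeType d}.

Definition lhom (h : L -> bool) :=
  (forall x y, h (x `&` y) = h x && h y) /\ (forall x y, h (x `|` y) = h x || h y).

Lemma lhom_le h : lhom h -> forall x y : L, x <= y -> h x -> h y.
Proof. by move=> [hm hj] x y /meet_idPl <-; rewrite hm => /andP[]. Qed.

Lemma distrE (D : distributive_lattice L) (a b c : L) :
  a `&` (b `|` c) = (a `&` b) `|` (a `&` c).
Proof. exact: D. Qed.

Lemma distr_join (D : distributive_lattice L) (x y z : L) :
  x `|` (y `&` z) = (x `|` y) `&` (x `|` z).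
Proof.
rewrite (distrE D (x `|` y)) (meetC (x `|` y) x) (meet_idPl (leUl x y)).
rewrite (meetC (x `|` y) z) (distrE D z) joinA meetKUC.
by rewrite meetC.
Qed.

Lemma prime_sep (D : distributive_lattice L) (a b : L) :
  ~~ (a <= b) -> exists h, [/\ lhom h, h a & ~~ h b].
Proof.
move=> nab.
pose P : set (set L) := fun S =>
  [/\ (forall x y, S y -> x <= y -> S x), (forall x y, S x -> S y -> S (x `|` y)),
      ~ S a & (forall x, S x -> S b)].
have [A [[Adown Ajoin Aa Ab] Amax]] : exists A, P A /\ forall B, proper A B -> ~ P B.
  apply: Zorn_bigcup => FF FP Ftot; split.
  - by move=> x y [X FX Xy] xy; exists X => //; case: (FP X FX) => dX _ _ _; apply: dX xy.
  - move=> x y [X FX Xx] [Y FY Yy].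
    have [XY|YX] := Ftot X Y FX FY.
    + exists Y => //; case: (FP Y FY) => _ jY _ _; apply: jY => //; exact: XY.
    + exists X => //; case: (FP X FX) => _ jX _ _; apply: jX => //; exact: YX.
  - by move=> [X FX Xa]; case: (FP X FX) => _ _ nXa _; exact: nXa.
  - by move=> x [X FX Xx]; exists X => //; case: (FP X FX) => _ _ _ bX; exact: bX Xx.
have Abb : A b.
  apply: contrapT => nAb.
  have A0 : forall z, ~ A z by move=> z Az; apply: nAb; exact: Ab Az.
  apply: (Amax (fun z => z <= b)).
  - split; first by move=> z Az; case: (A0 z Az).
    by move=> H; apply: nAb; apply: H.
  - split.
    + by move=> x y yb xy; exact: le_trans xy yb.
    + by move=> x y xb yb; rewrite leUx xb.
    + by move=> ab; rewrite ab in nab.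
    + by [].
have prime : forall x y, A (x `&` y) -> A x \/ A y.
  move=> x y Axy; apply: contrapT => /not_orP[nAx nAy].
  have gen : forall w, ~ A w -> exists2 i, A i & a <= i `|` w.
    move=> w nAw; apply: contrapT => nex.
    apply: (Amax (fun z => exists2 i, A i & z <= i `|` w)).
    - split; first by move=> z Az; exists z => //; exact: leUl.
      by move=> H; apply: nAw; apply: H; exists b => //; exact: leUr.
    - split.
      + by move=> u v [i Ai vi] uv; exists i => //; exact: le_trans uv vi.
      + move=> u v [i Ai ui] [j Aj vj]; exists (i `|` j); first exact: Ajoin.
        rewrite leUx; apply/andP; split.
          by apply: le_trans ui _; rewrite leUx leUr andbT -joinA leUl.
        by apply: le_trans vj _; rewrite leUx leUr andbT (joinC i j) -joinA leUl.
      + by move=> [i Ai ai]; apply: nex; exists i.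
      + by move=> z _; exists b => //; exact: leUl.
  have [i Ai ai] := gen x nAx; have [j Aj aj] := gen y nAy.
  apply: Aa; apply: ((Adown) _ ((i `|` j) `|` (x `&` y))); first by apply: (Ajoin) => //; apply: (Ajoin).
  rewrite distr_join // lexI; apply/andP; split.
    by apply: le_trans ai _; rewrite leUx leUr andbT -joinA leUl.
  by apply: le_trans aj _; rewrite leUx leUr andbT (joinC i j) -joinA leUl.
exists (fun z => ~~ `[< A z >]); split.
- split=> x y.
  + apply/idP/idP.
    * move=> /asboolPn nAxy; apply/andP; split; apply/asboolPn => Ax; apply: nAxy;
        apply: (Adown) Ax _; [exact: leIl | exact: leIr].
    * move=> /andP[/asboolPn nAx /asboolPn nAy]; apply/asboolPn => Axy.
      by case: (prime x y Axy).
  + apply/idP/idP.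
    * move=> /asboolPn nAxy; apply/orP; apply: contrapT => /not_orP[].
      move=> /negP/negPn/asboolP Ax /negP/negPn/asboolP Ay; exact: nAxy (Ajoin _ _ Ax Ay).
    * move=> /orP[] /asboolPn nA; apply/asboolPn => Axy; apply: nA;
        apply: (Adown) Axy _; [exact: leUl | exact: leUr].
- by apply/asboolPn.
- by rewrite negbK; apply/asboolP.
Qed.

Lemma sep_le (D : distributive_lattice L) (x y : L) :
  (forall h, lhom h -> h x -> h y) -> x <= y.
Proof.
move=> H; apply: contraT => nxy; have [h [hh hx nhy]] := prime_sep D nxy.
by rewrite (H h hh hx) in nhy.
Qed.

Lemma sep_eq (D : distributive_lattice L) (x y : L) :
  (forall h, lhom h -> h x = h y) -> x = y.
Proof.
move=> H; apply/le_anti/andP; split; apply: sep_le => // h hh; by rewrite H.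
Qed.

End Basic.

Unset Implicit Arguments.
Local Open Scope order_scope.

Ltac lat := solve [ match goal with
 | |- is_true (?a `|` ?b <= _) => rewrite leUx; apply/andP; split; lat
 | |- is_true (_ <= ?a `&` ?b) => rewrite lexI; apply/andP; split; lat
 | |- is_true (?a <= ?a) => exact: lexx
 | |- is_true (?a `&` ?b <= ?c `|` ?e) =>
      first [ apply: (le_trans (leIl a b)); lat | apply: (le_trans (leIr b a)); lat
            | apply: (le_trans _ (leUl c e)); lat | apply: (le_trans _ (leUr e c)); lat ]
 | |- is_true (?a `&` ?b <= _) =>
      first [ apply: (le_trans (leIl a b)); lat | apply: (le_trans (leIr b a)); lat ]
 | |- is_true (_ <= ?c `|` ?e) =>
      first [ apply: (le_trans _ (leUl c e)); lat | apply: (le_trans _ (leUr e c)); lat ]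
 | |- _ => assumption
 end ].

Section Diamond.
Context {d : Order.disp_t} {L : latticeType d}.
Hypothesis Mod : forall x y z : L, x <= z -> x `|` (y `&` z) = (x `|` y) `&` z.

Definition Vt (x y z : L) := (x `&` y) `|` (y `&` z) `|` (z `&` x).
Definition Ut (x y z : L) := (x `|` y) `&` (y `|` z) `&` (z `|` x).

Lemma Vt_xzy x y z : Vt x z y = Vt x y z.
Proof. by apply/le_anti/andP; split; rewrite /Vt; lat. Qed.
Lemma Vt_yzx x y z : Vt y z x = Vt x y z.
Proof. by apply/le_anti/andP; split; rewrite /Vt; lat. Qed.
Lemma Ut_xzy x y z : Ut x z y = Ut x y z.
Proof. by apply/le_anti/andP; split; rewrite /Ut; lat. Qed.
Lemma Ut_yzx x y z : Ut y z x = Ut x y z.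
Proof. by apply/le_anti/andP; split; rewrite /Ut; lat. Qed.

Lemma diam x y z :
  ((x `&` Ut x y z) `|` Vt x y z) `&` ((y `&` Ut x y z) `|` Vt x y z) <= Vt x y z /\
  Ut x y z <= ((x `&` Ut x y z) `|` Vt x y z) `|` ((y `&` Ut x y z) `|` Vt x y z).
Proof.
split.
  rewrite (joinC (x `&` Ut x y z)).
  rewrite -(Mod (Vt x y z) (x `&` Ut x y z) ((y `&` Ut x y z) `|` Vt x y z)); last exact: leUr.
  rewrite leUx lexx /=.
  apply: (le_trans (y := ((z `&` x) `|` (y `&` Ut x y z)) `&` x)).
    by rewrite /Ut /Vt; lat.
  by rewrite -(Mod (z `&` x) (y `&` Ut x y z) x); rewrite /Ut /Vt; lat.
apply: (le_trans (y := ((y `&` Ut x y z) `|` x) `&` Ut x y z)).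
  rewrite lexI lexx andbT.
  apply: (le_trans (y := x `|` (y `&` (x `|` z)))).
    by rewrite (Mod x y (x `|` z)); rewrite /Ut; lat.
  by rewrite /Ut; lat.
by rewrite -(Mod (y `&` Ut x y z) x (Ut x y z)); rewrite /Ut /Vt; lat.
Qed.

Hypothesis Star : forall a b c : L, a `&` b = a `&` c -> a `&` c = b `&` c ->
  (a `|` c) `&` b <= a `&` b.

Lemma distr_of_star : distributive_lattice L.
Proof.
move=> x y z; apply/le_anti/andP; split; last by lat.
have [h1 j1] := diam x y z.
have [h2 j2] := diam x z y.
have [h3 j3] := diam y z x.
rewrite Vt_xzy Ut_xzy in h2 j2; rewrite Vt_yzx Ut_yzx in h3 j3.
move: h1 j1 h2 j2 h3 j3.
set v := Vt x y z; set u := Ut x y z.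
set x1 := (x `&` u) `|` v; set y1 := (y `&` u) `|` v; set z1 := (z `&` u) `|` v.
move=> h1 j1 h2 j2 h3 j3.
have vx1 : v <= x1 by exact: leUr.
have vy1 : v <= y1 by exact: leUr.
have vz1 : v <= z1 by exact: leUr.
have vu : v <= u by rewrite /v /u /Vt /Ut; lat.
have y1u : y1 <= u by rewrite /y1 leUx vu leIr.
have e1 : x1 `&` y1 = v by apply/le_anti; rewrite h1 lexI vx1 vy1.
have e2 : x1 `&` z1 = v by apply/le_anti; rewrite h2 lexI vx1 vz1.
have e3 : y1 `&` z1 = v by apply/le_anti; rewrite h3 lexI vy1 vz1.
have st := Star x1 y1 z1.
rewrite e1 e2 e3 in st; have {}st := st erefl erefl.
have y1v : y1 <= v.
  apply: le_trans st; rewrite lexI lexx andbT; exact: le_trans y1u j2.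
have ux1 : u <= x1.
  apply: (le_trans j1); rewrite leUx lexx /=; exact: le_trans y1v vx1.
have uz1 : u <= z1.
  apply: (le_trans j3); rewrite leUx lexx andbT; exact: le_trans y1v vz1.
have uv : u <= v by rewrite -e2 lexI ux1 uz1.
apply: (le_trans (y := ((x `&` y) `|` (z `&` x) `|` (y `&` z)) `&` x)).
  rewrite lexI leIl andbT.
  apply: (le_trans (y := v)); last by rewrite /v /Vt; lat.
  apply: le_trans uv; rewrite /u /Ut; lat.
by rewrite -(Mod ((x `&` y) `|` (z `&` x)) (y `&` z) x); lat.
Qed.

End Diamond.

Set Implicit Arguments.
Local Open Scope order_scope.

Section Generic.
Context {T : Type} (le : T -> T -> Prop).
Hypothesis le_refl : forall x, le x x.
Context (le_tr : forall {x y z}, le x y -> le y z -> le x z).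
Hypothesis le_ant : forall x y, le x y -> le y x -> x = y.

Lemma lub_uniq x y s s' : is_lub le x y s -> is_lub le x y s' -> s = s'.
Proof.
by move=> [h1 [h2 h3]] [h1' [h2' h3']]; apply: le_ant; [apply: h3 | apply: h3'].
Qed.

Lemma glb_uniq x y s s' : is_glb le x y s -> is_glb le x y s' -> s = s'.
Proof.
by move=> [h1 [h2 h3]] [h1' [h2' h3']]; apply: le_ant; [apply: h3' | apply: h3].
Qed.

Lemma arg_mod join meet : lattice_ops le join meet -> arguesian_identity le join meet ->
  modular_identity le join meet.
Proof.
move=> [Hj Hm] Harg x y z xz.
apply: le_ant.
-
  have [a1 [a2 a3]] := Hj x (meet y z).
  apply: a3.
  + have [b1 [b2 b3]] := Hm (join x y) z; apply: b3 => //; exact: (proj1 (Hj x y)).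
  + have [b1 [b2 b3]] := Hm (join x y) z; apply: b3.
    * apply: le_tr (proj1 (proj2 (Hj x y))); exact: (proj1 (Hm y z)).
    * exact: (proj1 (proj2 (Hm y z))).
- pose t := join (join x y) z.
  have H := Harg x z t y z t; rewrite /= in H.
  have Exz : join x z = z.
    have [c1 [c2 c3]] := Hj x z; apply: le_ant; first by apply: c3.
    exact: c2.
  have Ezz : join z z = z.
    have [c1 [c2 c3]] := Hj z z; apply: le_ant; first by apply: c3.
    exact: c1.
  have Ett : join t t = t.
    have [c1 [c2 c3]] := Hj t t; apply: le_ant; first by apply: c3.
    exact: c1.
  have zt : le z t by exact: (proj1 (proj2 (Hj _ z))).
  rewrite Exz Ezz Ett in H.
  move: H; set C := meet (meet z _) _ => H.
  have cz : le C z.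
    apply: le_tr (proj1 (Hm _ _)) _; exact: (proj1 (Hm _ _)).
  have Ecz : join C z = z.
    have [f1 [f2 f3]] := Hj C z; apply: le_ant; first by apply: f3.
    exact: f2.
  rewrite Ecz in H.
  apply: le_tr H.
  have [b1 [b2 b3]] := Hm (meet (join x y) z) t.
  have [e1 [e2 e3]] := Hm (join x y) z.
  apply: b3 => //.
  exact: le_tr e2 zt.
Qed.

End Generic.

Section M3basic.
Context {d : Order.disp_t} {L : latticeType d}.

Definition c1 (x : M3 L) : L := (sval x).1.1.
Definition c2 (x : M3 L) : L := (sval x).1.2.
Definition c3 (x : M3 L) : L := (sval x).2.

Lemma M3_leE (x y : M3 L) : M3_le x y <-> [/\ c1 x <= c1 y, c2 x <= c2 y & c3 x <= c3 y].
Proof. by []. Qed.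

Lemma M3_le_refl (x : M3 L) : M3_le x x.
Proof. by split. Qed.

Lemma M3_le_trans (x y z : M3 L) : M3_le x y -> M3_le y z -> M3_le x z.
Proof.
by move=> [h1 h2 h3] [k1 k2 k3]; split; [apply: le_trans h1 k1|apply: le_trans h2 k2|apply: le_trans h3 k3].
Qed.

Lemma M3_ext (x y : M3 L) : c1 x = c1 y -> c2 x = c2 y -> c3 x = c3 y -> x = y.
Proof.
case: x => [[[a b] c] Hx]; case: y => [[[a' b'] c'] Hy]; rewrite /c1 /c2 /c3 /= => e1 e2 e3.
subst; congr exist; exact: bool_irrelevance.
Qed.

Lemma M3_le_anti (x y : M3 L) : M3_le x y -> M3_le y x -> x = y.
Proof.
move=> [h1 h2 h3] [k1 k2 k3]; apply: M3_ext; apply/le_anti; by rewrite ?h1 ?h2 ?h3 ?k1 ?k2 ?k3.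
Qed.

Lemma balE (x : M3 L) : c1 x `&` c2 x = c1 x `&` c3 x /\ c1 x `&` c3 x = c2 x `&` c3 x.
Proof. by move: (valP x); rewrite /balanced => /andP[/eqP e1 /eqP e2]. Qed.

Definition mk (a b c : L) (H : balanced (a, b, c)) : M3 L := exist _ (a, b, c) H.

Lemma diag_bal (x : L) : balanced (x, x, x).
Proof. by rewrite /balanced /= eqxx. Qed.

Definition diag x := mk (diag_bal x).

Lemma c1mk a b c (H : balanced (a, b, c)) : c1 (mk H) = a. Proof. by []. Qed.
Lemma c2mk a b c (H : balanced (a, b, c)) : c2 (mk H) = b. Proof. by []. Qed.
Lemma c3mk a b c (H : balanced (a, b, c)) : c3 (mk H) = c. Proof. by []. Qed.

Lemma bal_meetc (p q : M3 L) :
  balanced (c1 p `&` c1 q, c2 p `&` c2 q, c3 p `&` c3 q).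
Proof.
have [p1 p2] := balE p; have [q1 q2] := balE q.
apply/andP; split; apply/eqP => /=.
  by rewrite meetACA p1 q1 meetACA.
by rewrite meetACA p2 q2 meetACA.
Qed.

Lemma modM3_distr : is_modular_lattice (@M3_le d L) -> distributive_lattice L.
Proof.
move=> [join [meet [[Hj Hm] Hmod]]].
have joinD : forall p q (al be : L), c1 p = al -> c2 p = al -> c3 p = al ->
    c1 q = be -> c2 q = be -> c3 q = be ->
    [/\ c1 (join p q) = al `|` be, c2 (join p q) = al `|` be & c3 (join p q) = al `|` be].
  move=> p q al be p1 p2 p3 q1 q2 q3.
  have [/M3_leE[u1 u2 u3] [/M3_leE[w1 w2 w3] H]] := Hj p q.
  have /M3_leE[s1 s2 s3] : M3_le (join p q) (diag (al `|` be)).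
    by apply: H; apply/M3_leE; rewrite /diag !c1mk !c2mk !c3mk ?p1 ?p2 ?p3 ?q1 ?q2 ?q3 ?leUl ?leUr.
  rewrite /diag !c1mk !c2mk !c3mk in s1 s2 s3.
  rewrite p1 p2 p3 q1 q2 q3 in u1 u2 u3 w1 w2 w3.
  by split; apply/le_anti; rewrite ?s1 ?s2 ?s3 leUx ?u1 ?u2 ?u3 ?w1 ?w2 ?w3.
have meetD : forall p q (al be : L), c1 p = al -> c2 p = al -> c3 p = al ->
    c1 q = be -> c2 q = be -> c3 q = be ->
    [/\ c1 (meet p q) = al `&` be, c2 (meet p q) = al `&` be & c3 (meet p q) = al `&` be].
  move=> p q al be p1 p2 p3 q1 q2 q3.
  have [/M3_leE[u1 u2 u3] [/M3_leE[w1 w2 w3] H]] := Hm p q.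
  have /M3_leE[s1 s2 s3] : M3_le (diag (al `&` be)) (meet p q).
    by apply: H; apply/M3_leE; rewrite /diag !c1mk !c2mk !c3mk ?p1 ?p2 ?p3 ?q1 ?q2 ?q3 ?leIl ?leIr.
  rewrite /diag !c1mk !c2mk !c3mk in s1 s2 s3.
  rewrite p1 p2 p3 q1 q2 q3 in u1 u2 u3 w1 w2 w3.
  by split; apply/le_anti; rewrite ?s1 ?s2 ?s3 lexI ?u1 ?u2 ?u3 ?w1 ?w2 ?w3.
have LMod : forall x y z : L, x <= z -> x `|` (y `&` z) = (x `|` y) `&` z.
  move=> x y z xz.
  have := Hmod (diag x) (diag y) (diag z); rewrite /=.
  have [m1 m2 m3] := meetD (diag y) (diag z) y z erefl erefl erefl erefl erefl erefl.
  have [j1 j2 j3] := joinD (diag x) _ x _ erefl erefl erefl m1 m2 m3.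
  have [k1 k2 k3] := joinD (diag x) (diag y) x y erefl erefl erefl erefl erefl erefl.
  have [l1 l2 l3] := meetD _ (diag z) _ z k1 k2 k3 erefl erefl erefl.
  move=> /(_ (And3 xz xz xz)) E.
  by rewrite -j1 E l1.
apply: (distr_of_star LMod).
move=> a b c eab eac.
set v := a `&` b.
have va : v <= a by exact: leIl.
have vb : v <= b by exact: leIr.
have vc : v <= c by rewrite /v eab leIr.
have bX : balanced (v, v, a).
  by apply/andP; split; apply/eqP => /=; rewrite ?meetxx ?(meet_idPl va).
have bY : balanced (a, c, v).
  apply/andP; split; apply/eqP => /=.
    by rewrite (meet_idPr (leIl a b)) /v eab.
  by rewrite (meet_idPr (leIl a b)) (meetC c) (meet_idPl vc).
have bZ : balanced (v, b, a).
  apply/andP; split; apply/eqP => /=.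
    by rewrite (meet_idPl va) (meet_idPl vb).
  by rewrite (meet_idPl va) meetC.
pose X := mk bX; pose Y := mk bY; pose Z := mk bZ.
have XZ : M3_le X Z by split; rewrite /c1 /c2 /c3 /= ?lexx.
have E := Hmod X Y Z XZ.
pose s := join X Y.
have [[sX1 sX2 sX3] [[sY1 sY2 sY3] _]] := Hj X Y.
rewrite /c1 /c2 /c3 /= -/(c1 s) -/(c2 s) -/(c3 s) in sX1 sX2 sX3 sY1 sY2 sY3.
have acs : a `|` c <= c2 s.
  rewrite leUx sY2 andbT.
  have [e1 _] := balE s.
  apply: (le_trans _ (leIr (c2 s) (c1 s))).
  by rewrite e1 lexI sY1 sX3.
have YZX : M3_le (meet Y Z) X.
  have [[y1 y2 y3] [[z1 z2 z3] _]] := Hm Y Z.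
  rewrite /c1 /c2 /c3 /= in y1 y2 y3 z1 z2 z3 *.
  split => //; rewrite /X /=.
  apply: (le_trans (_ : _ <= c `&` b)); first by rewrite lexI y2 z2.
  by rewrite meetC -eac -eab lexx.
have up : M3_le (join X (meet Y Z)) X.
  have [_ [_ H]] := Hj X (meet Y Z); apply: H => //; exact: M3_le_refl.
pose K := mk (bal_meetc s Z).
have KR : M3_le K (meet s Z).
  have [_ [_ H]] := Hm s Z; apply: H.
    by split; rewrite /c1 /c2 /c3 /= leIl.
  by split; rewrite /c1 /c2 /c3 /= leIr.
rewrite -E in KR.
have [_ k2 _] := KR; have [_ u2 _] := up.
rewrite /c2 /= -/(c2 s) in k2 u2.
apply: le_trans (le_trans k2 u2).
by rewrite /c2 /= leI2 ?lexx.
Qed.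

End M3basic.

Local Open Scope order_scope.

Definition B3 := (bool * bool * bool)%type.
Definition joinB (p q : B3) : B3 :=
  let a := p.1.1 || q.1.1 in let b := p.1.2 || q.1.2 in let c := p.2 || q.2 in
  (a || (b && c), b || (a && c), c || (a && b)).
Definition meetB (p q : B3) : B3 := (p.1.1 && q.1.1, p.1.2 && q.1.2, p.2 && q.2).
Definition leB (p q : B3) : bool := [&& p.1.1 ==> q.1.1, p.1.2 ==> q.1.2 & p.2 ==> q.2].
Definition balB (p : B3) : bool :=
  (p.1.1 && p.1.2 == p.1.1 && p.2) && (p.1.1 && p.2 == p.1.2 && p.2).
Definition bal5 : seq B3 := [:: (false,false,false); (true,false,false);
  (false,true,false); (false,false,true); (true,true,true)].
Definition argB (a0 a1 a2 b0 b1 b2 : B3) :=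
  let c0 := meetB (joinB a1 a2) (joinB b1 b2) in
  let c1 := meetB (joinB a0 a2) (joinB b0 b2) in
  let c2 := meetB (joinB a0 a1) (joinB b0 b1) in
  let c := meetB c2 (joinB c0 c1) in
  leB (meetB (meetB (joinB a0 b0) (joinB a1 b1)) (joinB a2 b2))
      (joinB a0 (meetB b0 (joinB c b1))).
Lemma argB_all : all (fun a0 => all (fun a1 => all (fun a2 => all (fun b0 =>
  all (fun b1 => all (fun b2 => argB a0 a1 a2 b0 b1 b2) bal5) bal5) bal5) bal5) bal5) bal5.
Proof. vm_compute. reflexivity. Qed.

Lemma balB5 p : balB p -> p \in bal5.
Proof. by move: p => [[[] []] []]. Qed.

Lemma argB_ok a0 a1 a2 b0 b1 b2 : balB a0 -> balB a1 -> balB a2 -> balB b0 -> balB b1 ->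
  balB b2 -> argB a0 a1 a2 b0 b1 b2.
Proof.
move=> /balB5 h0 /balB5 h1 /balB5 h2 /balB5 k0 /balB5 k1 /balB5 k2.
have := argB_all.
move=> /allP /(_ _ h0) /allP /(_ _ h1) /allP /(_ _ h2) /allP /(_ _ k0) /allP /(_ _ k1)
  /allP /(_ _ k2); exact.
Qed.

Lemma B_lub1 p q : leB p (joinB p q).
Proof. by move: p q => [[[] []] []] [[[] []] []]. Qed.
Lemma B_lub2 p q : leB q (joinB p q).
Proof. by move: p q => [[[] []] []] [[[] []] []]. Qed.
Lemma B_lub3 p q r : balB r -> leB p r -> leB q r -> leB (joinB p q) r.
Proof. by move: p q r => [[[] []] []] [[[] []] []] [[[] []] []]. Qed.
Lemma B_mod1 p q r : balB p -> balB q -> balB r -> leB p r ->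
  leB (joinB p (meetB q r)) (meetB (joinB p q) r).
Proof. by move: p q r => [[[] []] []] [[[] []] []] [[[] []] []]. Qed.
Lemma B_mod2 p q r : balB p -> balB q -> balB r -> leB p r ->
  leB (meetB (joinB p q) r) (joinB p (meetB q r)).
Proof. by move: p q r => [[[] []] []] [[[] []] []] [[[] []] []]. Qed.
Lemma B_bal_join p q : balB p -> balB q -> balB (joinB p q).
Proof. by move: p q => [[[] []] []] [[[] []] []]. Qed.

Section Dist.
Context {d : Order.disp_t} {L : latticeType d} (D : distributive_lattice L).

Definition Hh (h : L -> bool) (x : M3 L) : B3 := (h (c1 x), h (c2 x), h (c3 x)).

Lemma Hh_bal h x : lhom h -> balB (Hh h x).
Proof.
move=> [hm hj]; have [e1 e2] := balE x.
by rewrite /balB /Hh /= -!hm e1 e2 !eqxx.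
Qed.

Lemma Hh_le h x y : lhom h -> M3_le x y -> leB (Hh h x) (Hh h y).
Proof.
move=> hh /M3_leE[l1 l2 l3]; rewrite /leB /Hh /=.
by apply/and3P; split; apply/implyP; apply: lhom_le.
Qed.

Lemma sepM3_le (x y : M3 L) : (forall h, lhom h -> leB (Hh h x) (Hh h y)) -> M3_le x y.
Proof.
move=> H; apply/M3_leE; split; apply: (sep_le D) => h hh;
  have /and3P[i1 i2 i3] := H h hh; exact/implyP.
Qed.

Definition jc1 (x y : M3 L) := (c1 x `|` c1 y) `|` ((c2 x `|` c2 y) `&` (c3 x `|` c3 y)).
Definition jc2 (x y : M3 L) := (c2 x `|` c2 y) `|` ((c1 x `|` c1 y) `&` (c3 x `|` c3 y)).
Definition jc3 (x y : M3 L) := (c3 x `|` c3 y) `|` ((c1 x `|` c1 y) `&` (c2 x `|` c2 y)).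

Lemma jbal (x y : M3 L) : balanced (jc1 x y, jc2 x y, jc3 x y).
Proof.
apply/andP; split; apply/eqP; apply: (sep_eq D) => h hh;
have := B_bal_join (Hh_bal x hh) (Hh_bal y hh); have [hm hj] := hh;
rewrite /balB /jc1 /jc2 /jc3 /joinB /Hh /= !(hm, hj) => /andP[/eqP e1 /eqP e2] //.
Qed.

Definition M3join (x y : M3 L) : M3 L := mk (jbal x y).
Definition M3meet (x y : M3 L) : M3 L := mk (bal_meetc x y).

Lemma Hh_join h x y : lhom h -> Hh h (M3join x y) = joinB (Hh h x) (Hh h y).
Proof. by move=> [hm hj]; rewrite /Hh /M3join /jc1 /jc2 /jc3 !c1mk !c2mk !c3mk /joinB /= !(hm, hj). Qed.

Lemma Hh_meet h x y : lhom h -> Hh h (M3meet x y) = meetB (Hh h x) (Hh h y).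
Proof. by move=> [hm hj]; rewrite /Hh /M3meet !c1mk !c2mk !c3mk /meetB /= !hm. Qed.

Lemma M3_ops : lattice_ops (@M3_le d L) M3join M3meet.
Proof.
split=> x y.
- split; [|split].
  + by apply: sepM3_le => h hh; rewrite Hh_join //; exact: B_lub1.
  + by apply: sepM3_le => h hh; rewrite Hh_join //; exact: B_lub2.
  + move=> u xu yu; apply: sepM3_le => h hh; rewrite Hh_join //.
    by apply: B_lub3; [exact: Hh_bal | exact: Hh_le | exact: Hh_le].
- split; [|split].
  + by apply/M3_leE; rewrite /M3meet !c1mk !c2mk !c3mk !leIl.
  + by apply/M3_leE; rewrite /M3meet !c1mk !c2mk !c3mk !leIr.
  + move=> u /M3_leE[a1 a2 a3] /M3_leE[b1 b2 b3].
    by apply/M3_leE; rewrite /M3meet !c1mk !c2mk !c3mk !lexI a1 a2 a3 b1 b2 b3.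
Qed.

Lemma M3_mod : modular_identity (@M3_le d L) M3join M3meet.
Proof.
move=> x y z xz; apply: M3_le_anti; apply: sepM3_le => h hh;
rewrite !(Hh_join, Hh_meet) //.
  by apply: B_mod1; rewrite ?Hh_bal // Hh_le.
by apply: B_mod2; rewrite ?Hh_bal // Hh_le.
Qed.

Lemma M3_arg : arguesian_identity (@M3_le d L) M3join M3meet.
Proof.
move=> a0 a1 a2 b0 b1 b2 /=; apply: sepM3_le => h hh.
rewrite !(Hh_join, Hh_meet) //.
have := argB_ok (Hh_bal a0 hh) (Hh_bal a1 hh) (Hh_bal a2 hh) (Hh_bal b0 hh)
  (Hh_bal b1 hh) (Hh_bal b2 hh).
by [].
Qed.

End Dist.

Local Open Scope ring_scope.

Section FieldPart.
Variable F : fieldType.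

Definition memB (t : B3) (p q : F) : bool :=
  if t.1.1 && t.1.2 then true else if t.1.1 then q == 0 else if t.1.2 then p == 0
  else if t.2 then p == q else (p == 0) && (q == 0).

Lemma balB_cases (p : B3) : balB p -> p = (false,false,false) \/ p = (true,false,false)
  \/ p = (false,true,false) \/ p = (false,false,true) \/ p = (true,true,true).
Proof. by move: p => [[[] []] []]; rewrite /balB //=; auto 6. Qed.

Ltac b5 t := move=> /balB_cases [->|[->|[->|[->|->]]]].

Ltac negs := repeat match goal with
 | H : is_true (?a != ?a) |- _ => by rewrite eqxx in H
 | H : is_true (?a != ?b) |- _ =>
   rewrite ?(negbTE H) ?(eq_sym b a) ?(negbTE H); clear H end.

Ltac fsolve p q :=
  have [?|?] := eqVneq p q; try subst p; have [?|?] := eqVneq q 0; try subst q;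
  try (have [?|?] := eqVneq p 0; try subst p); negs; rewrite /= ?eqxx ?andbT ?andbF ?orbT ?orbF //.

Lemma memB0 t : memB t 0 0.
Proof. by rewrite /memB; case: t => [[[] []] []]; rewrite /= ?eqxx. Qed.

Lemma memB_lin t (a p q p' q' : F) : balB t -> memB t p q -> memB t p' q' ->
  memB t (a * p + p') (a * q + q').
Proof.
b5 t; rewrite /memB /= //.
- by move=> /andP[/eqP -> /eqP ->] /andP[/eqP -> /eqP ->]; rewrite mulr0 addr0 eqxx.
- by move=> /eqP -> /eqP ->; rewrite mulr0 addr0.
- by move=> /eqP -> /eqP ->; rewrite mulr0 addr0.
- by move=> /eqP -> /eqP ->.
Qed.

Lemma memB_mono t t' p q : balB t -> balB t' -> leB t t' -> memB t p q -> memB t' p q.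
Proof.
b5 t; b5 t'; rewrite /memB /leB //= => hle; apply/implyP; try discriminate; fsolve p q.
Qed.

Lemma memB_meet t t' p q : balB t -> balB t' ->
  memB (meetB t t') p q = memB t p q && memB t' p q.
Proof.
b5 t; b5 t'; rewrite /memB /meetB //=; try fsolve p q.
Qed.

Lemma memB_join t t' p q : balB t -> balB t' -> memB (joinB t t') p q ->
  exists p1 q1, memB t p1 q1 && memB t' (p - p1) (q - q1).
Proof.
b5 t; b5 t'; rewrite /memB /joinB /= => H;
  let tac := solve [ by rewrite ?subr0 ?subrr ?eqxx ?andbT ?andTb
                   | rewrite ?subr0 ?subrr ?eqxx ?andbT ?andTb; apply/eqP; ring ] in
  first [ exists 0, 0; tac | exists p, q; tac | exists p, 0; tac | exists 0, q; tac
        | exists (p - q), 0; tac | exists q, q; tac | exists 0, (q - p); tac | exists p, p; tac ].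
Qed.

Lemma memB_wit t t' : balB t -> balB t' -> ~~ leB t t' ->
  exists p q : F, memB t p q && ~~ memB t' p q.
Proof.
have o1 : (1 == 0 :> F) = false by rewrite oner_eq0.
have o2 : (0 == 1 :> F) = false by rewrite eq_sym oner_eq0.
b5 t; b5 t'; rewrite /leB //= => _;
  first [ by exists 1, 0; rewrite /memB /= ?o1 ?o2 ?eqxx
        | by exists 0, 1; rewrite /memB /= ?o1 ?o2 ?eqxx
        | by exists 1, 1; rewrite /memB /= ?o1 ?o2 ?eqxx ].
Qed.

End FieldPart.

Local Open Scope ring_scope.

Section Emb.
Context {d : Order.disp_t} {L : latticeType d} (D : distributive_lattice L) (F : fieldType).

Definition Idx := {h : L -> bool | lhom h}.
Definition VV : lmodType F := (Idx * bool) -> F^o.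
Definition fM (x : M3 L) : VV -> Prop :=
  fun v => forall i : Idx, @memB F (Hh (sval i) x) (v (i, false)) (v (i, true)).

Lemma fM_sub x : is_subspace (fM x).
Proof.
split; first by move=> i; exact: memB0.
move=> a u v Hu Hv i.
exact: (memB_lin (F:=F) a (Hh_bal x (svalP i)) (Hu i) (Hv i)).
Qed.

Lemma fM_incl x y : (forall v, fM x v -> fM y v) -> M3_le x y.
Proof.
move=> H; apply: (sepM3_le D) => h hh; apply: contraT => nle.
have wsel : forall i : Idx, exists pq : F * F,
    memB (Hh (sval i) x) pq.1 pq.2 &&
    (leB (Hh (sval i) x) (Hh (sval i) y) || ~~ memB (Hh (sval i) y) pq.1 pq.2).
  move=> i; have bx := Hh_bal x (svalP i); have bY := Hh_bal y (svalP i).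
  case: (boolP (leB _ _)) => [le|nl].
    by exists (0, 0); rewrite memB0.
  by have [p [q pq]] := memB_wit F bx bY nl; exists (p, q); rewrite orFb.
pose W i := sval (cid (wsel i)).
pose v : VV := fun ib => if ib.2 then (W ib.1).2 else (W ib.1).1.
have vx : fM x v by move=> i; rewrite /v /=; have /andP[] := svalP (cid (wsel i)).
pose i0 : Idx := exist _ h hh.
have P0 : memB (Hh h x) (W i0).1 (W i0).2 &&
   (leB (Hh h x) (Hh h y) || ~~ memB (Hh h y) (W i0).1 (W i0).2) := svalP (cid (wsel i0)).
rewrite (negbTE nle) orFb in P0; case/andP: P0 => _ P0.
have HH := H v vx i0.
by exfalso; apply: (negP P0); exact: HH.
Qed.

Lemma fM_emb : subspace_lattice_embedding (@M3_le d L) fM.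
Proof.
split; first exact: fM_sub.
split.
  move=> x y E; apply: M3_le_anti; apply: fM_incl => v; rewrite E //.
split.
  move=> x y s Hs.
  have -> : s = M3join D x y := lub_uniq (@M3_le_anti d L) Hs (proj1 (M3_ops D) x y).
  move=> v; split.
  - move=> Hv.
    have dec : forall i : Idx, exists pq : F * F,
        memB (Hh (sval i) x) pq.1 pq.2 &&
        memB (Hh (sval i) y) (v (i, false) - pq.1) (v (i, true) - pq.2).
      move=> i; have := Hv i; rewrite (Hh_join D _ _ (svalP i)) => /memB_join.
      case/(_ (Hh_bal x (svalP i)) (Hh_bal y (svalP i))) => p1 [q1 H1].
      by exists (p1, q1).
    pose U i := sval (cid (dec i)).
    pose u : VV := fun ib => if ib.2 then (U ib.1).2 else (U ib.1).1.
    exists u, (v - u); split; [|split].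
    + by move=> i; rewrite /u /=; have /andP[] := svalP (cid (dec i)).
    + by move=> i; rewrite /u /=; have /andP[] := svalP (cid (dec i)).
    + by rewrite addrC subrK.
  - move=> [u [w [Hu [Hw ->]]]] i.
    rewrite (Hh_join D _ _ (svalP i)).
    have bx := Hh_bal x (svalP i); have bY := Hh_bal y (svalP i).
    have bj := B_bal_join bx bY.
    have := memB_lin (F:=F) 1 bj (memB_mono (F:=F) bx bj (B_lub1 _ _) (Hu i))
                           (memB_mono (F:=F) bY bj (B_lub2 _ _) (Hw i)).
    by rewrite !mul1r.
move=> x y m Hm.
have -> : m = M3meet x y := glb_uniq (@M3_le_anti d L) Hm (proj2 (M3_ops D) x y).
move=> v; split.
- move=> Hv; split=> i; have := Hv i; rewrite (Hh_meet _ _ (svalP i));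
  by rewrite (@memB_meet F _ _ _ _ (Hh_bal x (svalP i)) (Hh_bal y (svalP i))) => /andP[].
- move=> [Hx Hy] i; rewrite (Hh_meet _ _ (svalP i)).
  by rewrite (@memB_meet F _ _ _ _ (Hh_bal x (svalP i)) (Hh_bal y (svalP i))) Hx Hy.
Qed.

End Emb.

Close Scope ring_scope.
Close Scope order_scope.

Theorem proposition6p5 (d : Order.disp_t) (L : latticeType d) :
  (distributive_lattice L <-> is_modular_lattice (@M3_le d L)) /\
  (distributive_lattice L <-> is_arguesian_lattice (@M3_le d L)) /\
  (distributive_lattice L ->
     forall F : fieldType, exists (V : lmodType F) (f : M3 L -> V -> Prop),
       subspace_lattice_embedding (@M3_le d L) f).
Proof.
split; [|split].
- split.
  + move=> D; exists (M3join D), M3meet; split; [exact: M3_ops | exact: M3_mod].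
  + exact: modM3_distr.
- split.
  + move=> D; exists (M3join D), M3meet; split; [exact: M3_ops | exact: M3_arg].
  + move=> [j [m [ops arg]]]; apply: modM3_distr; exists j, m; split => //.
    exact: (arg_mod (@M3_le_refl d L) (@M3_le_trans d L) (@M3_le_anti d L) ops arg).
- move=> D F; exists (@VV d L F), (@fM d L F); exact: fM_emb D F.
Qed.
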